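(* Let $(H,\mu_H,\Delta_H,\alpha_H)$ be a Hom-bialgebra and $(A,\mu_A,\alpha_A)$ a left $H$-module Hom-algebra with action $h\otimes a\mapsto h\cdot a$, with $\alpha_H,\alpha_A$ bijective. Then the Hom-smash product $A\# H$ is a right $H$-comodule Hom-algebra via $\rho_{A\# H}:A\# H\to(A\# H)\otimes H$, $\rho_{A\# H}(a\# h)=(\alpha_A(a)\# h_1)\otimes h_2$.
   Context: Over a field $k$, no (co)units assumed; $\Delta(h)=h_1\otimes h_2$. A Hom-associative algebra is $(A,\mu,\alpha)$ with $\alpha(aa')=\alpha(a)\alpha(a')$, $\alpha(a)(a'a'')=(aa')\alpha(a'')$; a morphism $f$ of Hom-associative algebras satisfies $\alpha_B\circ f=f\circ\alpha_A$, $f\circ\mu_A=\mu_B\circ(f\otimes f)$; the tensor product of Hom-associative algebras has componentwise product and structure map. A Hom-bialgebra $(H,\mu,\Delta,\alpha)$: $(H,\mu,\alpha)$ Hom-associative, $\Delta(h_1)\otimes\alpha(h_2)=\alpha(h_1)\otimes\Delta(h_2)$, $\Delta(hh')=h_1h'_1\otimes h_2h'_2$, $\Delta(\alpha(h))=\alpha(h_1)\otimes\alpha(h_2)$. A left $H$-module Hom-algebra is a Hom-associative $(A,\mu_A,\alpha_A)$ with action satisfying $\alpha_A(h\cdot a)=\alpha_H(h)\cdot\alpha_A(a)$, $\alpha_H(h)\cdot(h'\cdot a)=(hh')\cdot\alpha_A(a)$, $\alpha_H^2(h)\cdot(aa')=(h_1\cdot a)(h_2\cdot a')$. The Hom-smash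 product $A\# H$ is $A\otimes H$ with structure map $\alpha_A\otimes\alpha_H$ and product $(a\# h)(a'\# h')=a(\alpha_H^{-2}(h_1)\cdot\alpha_A^{-1}(a'))\#\alpha_H^{-1}(h_2)h'$, a Hom-associative algebra. A right $H$-comodule structure on $(M,\alpha_M)$ is a linear $\rho:M\to M\otimes H$ with $(\alpha_M\otimes\alpha_H)\circ\rho=\rho\circ\alpha_M$ and $(\alpha_M\otimes\Delta_H)\circ\rho=(\rho\otimes\alpha_H)\circ\rho$. A right $H$-comodule Hom-algebra is a Hom-associative algebra $(D,\mu_D,\alpha_D)$ with a right $H$-comodule structure $\rho_D:D\to D\otimes H$ that is a morphism of Hom-associative algebras (to the tensor product $D\otimes H$). *)

(* Defs.v *)
From mathcomp Require Import all_boot all_algebra.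
Set Implicit Arguments. Unset Strict Implicit. Unset Printing Implicit Defensive.
Import GRing.Theory.
Local Open Scope ring_scope.

(* Elements of an algebraic tensor product U (x) V (x) ... over a field k are
   represented by finite lists of elementary tensors (formal sums); two lists
   denote the same tensor iff every multilinear map (into any k-vector space)
   takes the same value on them -- the universal property of the tensor
   product.  Everything is linear over k; no units/counits. *)

Section HomDefs.
Variable k : fieldType.

Definition klinear (U V : lmodType k) (f : U -> V) :=
  forall (c : k) x y, f (c *: x + y) = c *: f x + f y.

Definition bilin (U V W : lmodType k) (f : U -> V -> W) :=
  (forall v, klinear (fun u => f u v)) /\ (forall u, klinear (f u)).

Definition trilin (U V X W : lmodType k) (f : U -> V -> X -> W) :=
  [/\ forall v x, klinear (fun u => f u v x),
      forall u x, klinear (fun v => f u v x) &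
      forall u v, klinear (f u v)].

Definition quadrilin (U V X Y W : lmodType k) (f : U -> V -> X -> Y -> W) :=
  [/\ forall v x y, klinear (fun u => f u v x y),
      forall u x y, klinear (fun v => f u v x y),
      forall u v y, klinear (fun x => f u v x y) &
      forall u v x, klinear (f u v x)].

Definition teq2 (U V : lmodType k) (s t : seq (U * V)) :=
  forall (W : lmodType k) (f : U -> V -> W), bilin f ->
    \sum_(p <- s) f p.1 p.2 = \sum_(p <- t) f p.1 p.2.

Definition teq3 (U V X : lmodType k) (s t : seq (U * V * X)) :=
  forall (W : lmodType k) (f : U -> V -> X -> W), trilin f ->
    \sum_(p <- s) f p.1.1 p.1.2 p.2 = \sum_(p <- t) f p.1.1 p.1.2 p.2.

Definition teq4 (U V X Y : lmodType k) (s t : seq (U * V * X * Y)) :=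
  forall (W : lmodType k) (f : U -> V -> X -> Y -> W), quadrilin f ->
    \sum_(p <- s) f p.1.1.1 p.1.1.2 p.1.2 p.2
    = \sum_(p <- t) f p.1.1.1 p.1.1.2 p.1.2 p.2.

Definition scale2 (U V : lmodType k) (c : k) (s : seq (U * V)) :=
  [seq (c *: p.1, p.2) | p <- s].
Definition scale3 (U V X : lmodType k) (c : k) (s : seq (U * V * X)) :=
  [seq ((c *: p.1.1, p.1.2), p.2) | p <- s].

Definition hom_assoc (A : lmodType k) (mu : A -> A -> A) (alpha : A -> A) :=
  [/\ bilin mu, klinear alpha,
      forall a a', alpha (mu a a') = mu (alpha a) (alpha a') &
      forall a a' a'', mu (alpha a) (mu a' a'') = mu (mu a a') (alpha a'')].

(* Hom-bialgebra (H, mu, Delta, alpha); Delta h is a representative of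
   h_1 (x) h_2 in H (x) H *)
Definition hom_bialgebra (H : lmodType k) (mu : H -> H -> H)
    (Delta : H -> seq (H * H)) (alpha : H -> H) :=
  [/\ hom_assoc mu alpha,
      forall (c : k) x y, teq2 (Delta (c *: x + y)) (scale2 c (Delta x) ++ Delta y),
      forall h, teq3 [seq ((q.1, q.2), alpha p.2) | p <- Delta h, q <- Delta p.1]
                     [seq ((alpha p.1, q.1), q.2) | p <- Delta h, q <- Delta p.2],
      forall h h', teq2 (Delta (mu h h'))
                        [seq (mu p.1 q.1, mu p.2 q.2) | p <- Delta h, q <- Delta h'] &
      forall h, teq2 (Delta (alpha h)) [seq (alpha p.1, alpha p.2) | p <- Delta h]].

Definition module_hom_algebra (H : lmodType k) (muH : H -> H -> H)
    (Delta : H -> seq (H * H)) (alphaH : H -> H)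
    (A : lmodType k) (muA : A -> A -> A) (alphaA : A -> A) (act : H -> A -> A) :=
  [/\ hom_assoc muA alphaA, bilin act,
      forall h a, alphaA (act h a) = act (alphaH h) (alphaA a),
      forall h h' a, act (alphaH h) (act h' a) = act (muH h h') (alphaA a) &
      forall h a a', act (alphaH (alphaH h)) (muA a a')
                     = \sum_(p <- Delta h) muA (act p.1 a) (act p.2 a')].

Section Smash.
Variables (H A : lmodType k) (muH : H -> H -> H) (Delta : H -> seq (H * H))
  (alphaH : H -> H) (muA : A -> A -> A) (alphaA : A -> A) (act : H -> A -> A)
  (invH : H -> H) (invA : A -> A).

(* (a # h)(a' # h') = a (alpha_H^{-2}(h_1) . alpha_A^{-1}(a')) # alpha_H^{-1}(h_2) h' *)
Definition smash_mul_pure (x y : A * H) : seq (A * H) :=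
  [seq (muA x.1 (act (invH (invH p.1)) (invA y.1)), muH (invH p.2) y.2)
  | p <- Delta x.2].

Definition smash_mul (x y : seq (A * H)) : seq (A * H) :=
  flatten [seq smash_mul_pure p q | p <- x, q <- y].

Definition smash_alpha (x : seq (A * H)) : seq (A * H) :=
  [seq (alphaA p.1, alphaH p.2) | p <- x].

Definition smash_rho (x : seq (A * H)) : seq (A * H * H) :=
  [seq ((alphaA p.1, q.1), q.2) | p <- x, q <- Delta p.2].

Definition tens_alpha (z : seq (A * H * H)) : seq (A * H * H) :=
  [seq ((alphaA t.1.1, alphaH t.1.2), alphaH t.2) | t <- z].

Definition tens_mul (z w : seq (A * H * H)) : seq (A * H * H) :=
  flatten [seq [seq (r, muH t.2 u.2) | r <- smash_mul_pure t.1 u.1] | t <- z, u <- w].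

Definition coass_lhs (x : seq (A * H)) : seq (A * H * H * H) :=
  [seq (((alphaA t.1.1, alphaH t.1.2), q.1), q.2) | t <- smash_rho x, q <- Delta t.2].

Definition coass_rhs (x : seq (A * H)) : seq (A * H * H * H) :=
  [seq (r, alphaH t.2) | t <- smash_rho x, r <- smash_rho [:: t.1]].

End Smash.
End HomDefs.

(* Main.v *)
Require Import Defs.
From mathcomp Require Import all_boot all_algebra.
Set Implicit Arguments. Unset Strict Implicit. Unset Printing Implicit Defensive.
Import GRing.Theory.
Local Open Scope ring_scope.

Section Aux.
Variable k : fieldType.

Lemma klin0 (U V : lmodType k) (f : U -> V) : klinear f -> f 0 = 0.
Proof.
move=> lf; have := lf 1 0 0; rewrite !scale1r addr0.
by move=> h; apply: (addIr (f 0)); rewrite add0r -h.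
Qed.

Lemma klinD (U V : lmodType k) (f : U -> V) x y : klinear f -> f (x + y) = f x + f y.
Proof. by move=> lf; have := lf 1 x y; rewrite !scale1r. Qed.

Lemma klinZ (U V : lmodType k) (f : U -> V) c x : klinear f -> f (c *: x) = c *: f x.
Proof. by move=> lf; have := lf c x 0; rewrite !addr0 (klin0 lf) addr0. Qed.

Lemma klin_sum (U V : lmodType k) (f : U -> V) I (s : seq I) F : klinear f ->
  f (\sum_(i <- s) F i) = \sum_(i <- s) f (F i).
Proof.
move=> lf; elim: s => [|i s IH]; first by rewrite !big_nil (klin0 lf).
by rewrite !big_cons (klinD _ _ lf) IH.
Qed.

Lemma big_ap (W : lmodType k) I J T (s : seq I) (t : I -> seq J) (G : I -> J -> T)
  (F : T -> W) :
  \sum_(i <- flatten [seq [seq G x y | y <- t x] | x <- s]) F i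
  = \sum_(x <- s) \sum_(y <- t x) F (G x y).
Proof.
by rewrite big_flatten big_map; apply: eq_bigr => x _; rewrite big_map.
Qed.


Lemma bilL1 (U V W : lmodType k) (f : U -> V -> W) c x y v : bilin f ->
  f (c *: x + y) v = c *: f x v + f y v.
Proof. by case=> h _; exact: (h v). Qed.
Lemma bilL2 (U V W : lmodType k) (f : U -> V -> W) c x y u : bilin f ->
  f u (c *: x + y) = c *: f u x + f u y.
Proof. by case=> _ h; exact: (h u). Qed.
Lemma triL1 (U V X W : lmodType k) (f : U -> V -> X -> W) c x y v w : trilin f ->
  f (c *: x + y) v w = c *: f x v w + f y v w.
Proof. by case=> h _ _; exact: (h v w). Qed.
Lemma triL2 (U V X W : lmodType k) (f : U -> V -> X -> W) c x y u w : trilin f ->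
  f u (c *: x + y) w = c *: f u x w + f u y w.
Proof. by case=> _ h _; exact: (h u w). Qed.
Lemma triL3 (U V X W : lmodType k) (f : U -> V -> X -> W) c x y u v : trilin f ->
  f u v (c *: x + y) = c *: f u v x + f u v y.
Proof. by case=> _ _ h; exact: (h u v). Qed.

Lemma sumL (W : lmodType k) I (s : seq I) (F G : I -> W) c :
  \sum_(i <- s) (c *: F i + G i) = c *: \sum_(i <- s) F i + \sum_(i <- s) G i.
Proof. by rewrite big_split /= scaler_sumr. Qed.

Lemma Delta_lin (H W : lmodType k) (Delta : H -> seq (H * H)) (F : H -> H -> W) :
  (forall (c : k) x y, teq2 (Delta (c *: x + y)) (scale2 c (Delta x) ++ Delta y)) ->
  bilin F -> klinear (fun h => \sum_(p <- Delta h) F p.1 p.2).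
Proof.
move=> DL bF c x y; rewrite (DL c x y W F bF) big_cat big_map /= scaler_sumr.
congr (_ + _); apply: eq_bigr => p _; exact: klinZ (proj1 bF _).
Qed.

Lemma inv_lin (H : lmodType k) (al inv : H -> H) :
  klinear al -> cancel al inv -> cancel inv al -> klinear inv.
Proof.
by move=> aL c1 c2 c x y; apply: (can_inj c1); rewrite aL !c2.
Qed.

Lemma Delta_inv (H : lmodType k) (Delta : H -> seq (H * H)) (al inv : H -> H) :
  klinear al -> cancel al inv -> cancel inv al ->
  (forall h, teq2 (Delta (al h)) [seq (al p.1, al p.2) | p <- Delta h]) ->
  forall h, teq2 (Delta (inv h)) [seq (inv q.1, inv q.2) | q <- Delta h].
Proof.
move=> aL c1 c2 DA h W F bF; rewrite big_map /=.
have iL := inv_lin aL c1 c2.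
have bF' : bilin (fun u v => F (inv u) (inv v)).
  split=> v c a b /=; rewrite iL; [exact: bilL1 | exact: bilL2].
have := DA (inv h) W _ bF'; rewrite c2 big_map /= => ->.
by apply: eq_bigr => p _; rewrite !c1.
Qed.

End Aux.

Theorem proposition3p6 (k : fieldType) (H A : lmodType k)
  (muH : H -> H -> H) (Delta : H -> seq (H * H)) (alphaH : H -> H)
  (muA : A -> A -> A) (alphaA : A -> A) (act : H -> A -> A)
  (invH : H -> H) (invA : A -> A) :
  hom_bialgebra muH Delta alphaH ->
  module_hom_algebra muH Delta alphaH muA alphaA act ->
  cancel alphaH invH -> cancel invH alphaH ->
  cancel alphaA invA -> cancel invA alphaA ->
  let rho := smash_rho Delta alphaA in
  [/\ (* rho is a well-defined linear map A # H -> (A # H) (x) H *)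
      (forall x y : seq (A * H), teq2 x y -> teq3 (rho x) (rho y)),
      (forall (c : k) (x : seq (A * H)), teq3 (rho (scale2 c x)) (scale3 c (rho x))),
      (* (alpha_{A#H} (x) alpha_H) o rho = rho o alpha_{A#H}; this is also the
         compatibility of rho with the structure maps (Hom-algebra morphism) *)
      (forall x, teq3 (tens_alpha alphaH alphaA (rho x))
                      (rho (smash_alpha alphaH alphaA x))),
      (* (alpha_{A#H} (x) Delta_H) o rho = (rho (x) alpha_H) o rho *)
      (forall x, teq4 (coass_lhs Delta alphaH alphaA x)
                      (coass_rhs Delta alphaH alphaA x)) &
      (* rho is multiplicative *)
      (forall x y, teq3 (rho (smash_mul muH Delta muA act invH invA x y))
                        (tens_mul muH Delta muA act invH invA (rho x) (rho y)))].
Proof.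
move=> [[mHb aHl aHm _] DL CA DM DA] [[mAb aAl aAm _] actb actA _ _] cH1 cH2 cA1 cA2 rho.
rewrite {}/rho.
split.
- move=> x y exy W f tf; rewrite /smash_rho !big_ap.
  apply: (exy W (fun a h => \sum_(q <- Delta h) f (alphaA a) q.1 q.2)); split.
  + move=> h c a b /=; rewrite aAl -sumL; apply: eq_bigr => q _; exact: triL1.
  + move=> a; apply: (Delta_lin (F := fun u v => f (alphaA a) u v) DL).
    by split=> ?; case: tf.
- move=> c x W f tf; rewrite /smash_rho /scale3 /scale2 big_map !big_ap big_map.
  apply: eq_bigr => p _; apply: eq_bigr => q _ /=.
  by rewrite (klinZ _ _ aAl).
- move=> x W f tf; rewrite /smash_rho /tens_alpha /smash_alpha big_map !big_ap big_map.
  apply: eq_bigr => p _.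
  rewrite (DA p.2 W (fun u v => f (alphaA (alphaA p.1)) u v)) ?big_map //.
  by split=> ?; case: tf.
- move=> x W f tf; rewrite /coass_lhs /coass_rhs /smash_rho !big_ap.
  apply: eq_bigr => p _.
  under [RHS]eq_bigr => q0 _ do rewrite big_ap big_seq1 /=.
  have tg : trilin (fun u v w => f (alphaA (alphaA p.1)) u v w).
    by case: tf => _ h2 h3 h4; split=> *; [exact: h2|exact: h3|exact: h4].
  by have := CA p.2 W _ tg; rewrite !big_ap /= => ->.
- move=> x y W f tf.
  have iHL := inv_lin aHl cH1 cH2.
  rewrite /smash_rho /tens_mul /smash_mul.
  rewrite [LHS]big_ap [LHS]big_flatten [LHS]big_ap.
  rewrite [RHS]big_flatten [RHS]big_ap [RHS]big_ap.
  apply: eq_bigr => p _.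
  under [RHS]eq_bigr => d _ do rewrite big_ap.
  rewrite [RHS]exchange_big; apply: eq_bigr => q _.
  rewrite /smash_mul_pure big_map.
  under [RHS]eq_bigr => d _ do under eq_bigr => e _ do rewrite !big_map.
  under [RHS]eq_bigr => d _ do rewrite exchange_big.
  rewrite /=.
  pose G := fun u v w => \sum_(e <- Delta q.2)
     f (muA (alphaA p.1) (act (invH (invH u)) q.1)) (muH (invH v) e.1) (muH (invH w) e.2).
  have tG : trilin G.
    split=> ? ? c a b; rewrite /G -sumL; apply: eq_bigr => e _; rewrite !iHL.
    - by rewrite (bilL1 _ _ _ _ actb) (bilL2 _ _ _ _ mAb) (triL1 _ _ _ _ _ tf).
    - by rewrite (bilL1 _ _ _ _ mHb) (triL2 _ _ _ _ _ tf).
    - by rewrite (bilL1 _ _ _ _ mHb) (triL3 _ _ _ _ _ tf).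
  transitivity (\sum_(d <- Delta p.2) \sum_(r <- Delta d.1) G r.1 r.2 (alphaH d.2)); last first.
    by apply: eq_bigr => d _; apply: eq_bigr => r _; rewrite /G cH1 cA1.
  have := CA p.2 W G tG; rewrite !big_ap /= => ->.
  apply: eq_bigr => r _; rewrite /G cH1 aAm actA cH2 cA2.
  set K := muA (alphaA p.1) (act (invH r.1) q.1).
  have bK : bilin (fun u v => f K u v) by case: tf => _ h2 h3; split=> *; [exact: h2|exact: h3].
  rewrite (DM (invH r.2) q.2 W _ bK) big_ap.
  have bL : bilin (fun u1 u2 => \sum_(e <- Delta q.2) f K (muH u1 e.1) (muH u2 e.2)).
    split=> ? c a b /=; rewrite -sumL; apply: eq_bigr => e _.
    - by rewrite (bilL1 _ _ _ _ mHb) (triL2 _ _ _ _ _ tf).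
    - by rewrite (bilL1 _ _ _ _ mHb) (triL3 _ _ _ _ _ tf).
  by rewrite (Delta_inv aHl cH1 cH2 DA r.2 bL) big_map.
Qed.
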